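(* In a hierarchical tensor factorization with mode tree $\mathcal T$, for any $\nu\in\mathrm{int}(\mathcal T)$, $\nu_c\in C(\nu)$ and $r\in[R_\nu]$: (a) the end tensor obtained by replacing $W^{(\nu)}$ with the matrix whose $r$'th row is $W^{(\nu)}_{r,:}$ and whose other rows are zero (all other weight matrices unchanged) equals $\sigma_{\nu,r}\cdot\mathcal E_{\nu,r}$; and (b) the end tensor obtained by replacing $W^{(\nu_c)}$ with the matrix whose $r$'th column is $W^{(\nu_c)}_{:,r}$ and whose other columns are zero (all other weight matrices unchanged) equals $\sigma_{\nu,r}\cdot\mathcal E_{\nu,r}$.
   Context: Fix $N\in\mathbb N$, $D_1,\dots,D_N\in\mathbb N$; $[K]:=\{1,\dots,K\}$; norms are Frobenius norms; $\otimes$ the tensor product. A mode tree $\mathcal T$ over $[N]$ is a rooted tree whose nodes are labeled by subsets of $[N]$, with exactly $N$ leaves labeled $\{1\},\dots,\{N\}$, and where each interior node's label is the union of its children's labels; nodes are identified with labels, root $[N]$, $\mathrm{int}(\mathcal T)$ interior nodes, $Pa(\nu)$ parent, $C(\nu)$ children (fixed order). A hierarchical tensor factorization has $R_\nu\in\mathbb N$ ($\nu\in\mathrm{int}(\mathcal T)$), $R_{Pa([N])}:=1$, $R_{\{n\}}:=D_n$, weight matrices $W^{(\nu)}\in\mathbb R^{R_\nu\times R_{Pa(\nu)}}$. Intermediate tensors: $\mathcal W^{(\{n\},r)}:=W^{(\{n\})}_{:,r}$; for $\nu\in\mathrm{int}(\mathcal T)\setminus\{[N]\}$ (leaves to root),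 $r\in[R_{Pa(\nu)}]$: $\mathcal W^{(\nu,r)}:=\pi_\nu\big(\sum_{r'=1}^{R_\nu}W^{(\nu)}_{r',r}\bigotimes_{\nu_c\in C(\nu)}\mathcal W^{(\nu_c,r')}\big)$; end tensor $\mathcal W_H:=\pi_{[N]}\big(\sum_{r'=1}^{R_{[N]}}W^{([N])}_{r',1}\bigotimes_{\nu_c\in C([N])}\mathcal W^{(\nu_c,r')}\big)$, where $\pi_\nu$ permutes modes (ordered by children, each child's elements ascending) into ascending order of the elements of $\nu$. The norm of the $(\nu,r)$'th local component is $\sigma_{\nu,r}:=\|W^{(\nu)}_{r,:}\|\prod_{\nu_c\in C(\nu)}\|W^{(\nu_c)}_{:,r}\|$. $\mathcal E_{\nu,r}$ is the end tensor obtained from the same construction except that, for every $r'\in[R_{Pa(\nu)}]$, the tensor produced at node $\nu$ (the end tensor itself if $\nu=[N]$) is replaced by $\pi_\nu\big(\sigma_{\nu,r}^{-1}W^{(\nu)}_{r,r'}\bigotimes_{\nu_c\in C(\nu)}\mathcal W^{(\nu_c,r)}\big)$; $\mathcal E_{\nu,r}:=0$ if $\sigma_{\nu,r}=0$. *)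

(* Defs.v *)
From HB Require Import structures.
From mathcomp Require Import all_boot all_order all_algebra.
From Stdlib Require List.
Set Implicit Arguments. Unset Strict Implicit. Unset Printing Implicit Defensive.
Import Order.TTheory GRing.Theory Num.Theory.
Local Open Scope ring_scope.

(* Mode trees over the mode set 'I_N = {0,...,N-1} (0-based modes). *)
Inductive mtree (N : nat) : Type :=
| MLeaf of 'I_N
| MNode of seq (mtree N).
Arguments MLeaf {N}.
Arguments MNode {N}.

Fixpoint label N (t : mtree N) : {set 'I_N} :=
  match t with
  | MLeaf n => [set n]
  | MNode ts =>
      (fix lab (l : seq (mtree N)) : {set 'I_N} :=
         match l with [::] => set0 | c :: l' => label c :|: lab l' end) ts
  end.

Fixpoint leaves N (t : mtree N) : seq 'I_N :=
  match t with
  | MLeaf n => [:: n]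
  | MNode ts =>
      (fix go (l : seq (mtree N)) : seq 'I_N :=
         match l with [::] => [::] | c :: l' => leaves c ++ go l' end) ts
  end.

Fixpoint all_labels N (t : mtree N) : seq {set 'I_N} :=
  match t with
  | MLeaf n => [:: [set n]]
  | MNode ts =>
      label t ::
      (fix go (l : seq (mtree N)) : seq {set 'I_N} :=
         match l with [::] => [::] | c :: l' => all_labels c ++ go l' end) ts
  end.

(* every node built with MNode has at least one child (otherwise it would be
   a leaf not labeled by a singleton) *)
Fixpoint nonempty_nodes N (t : mtree N) : bool :=
  match t with
  | MLeaf _ => true
  | MNode ts =>
      (0 < size ts)%N &&
      (fix go (l : seq (mtree N)) : bool :=
         match l with [::] => true | c :: l' => nonempty_nodes c && go l' end) ts
  end.

(* A mode tree over [N]: exactly N leaves labeled {0},...,{N-1} (each once),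
   interior labels are unions of children labels (built in), and nodes are
   identified with their labels (labels pairwise distinct). *)
Definition mode_tree N (T : mtree N) : Prop :=
  [/\ perm_eq (leaves T) (enum 'I_N), nonempty_nodes T & uniq (all_labels T)].

(* R_nu for a node: D_n for the leaf {n}, Rk nu for an interior node nu *)
Definition node_rank N (D : 'I_N -> nat) (Rk : {set 'I_N} -> nat) (t : mtree N) : nat :=
  match t with MLeaf n => D n | MNode _ => Rk (label t) end.

(* interior nodes (given by their list of children) paired with R_{Pa(nu)} *)
Fixpoint int_nodes N (Rk : {set 'I_N} -> nat) (t : mtree N) (pr : nat)
  : seq (seq (mtree N) * nat) :=
  match t with
  | MLeaf _ => [::]
  | MNode ts =>
      (ts, pr) ::
      (fix go (l : seq (mtree N)) : seq (seq (mtree N) * nat) :=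
         match l with
         | [::] => [::]
         | c :: l' => int_nodes Rk c (Rk (label t)) ++ go l'
         end) ts
  end.

(* Multi-indices: an index in [D_n] for every mode n.  Tensors are functions
   of mode-labeled multi-indices (so the mode permutations pi_nu are built in). *)
Definition mindex N (D : 'I_N -> nat) := forall n : 'I_N, 'I_(D n).

(* Weight matrices: W nu a b is the (a,b) entry of W^(nu) (0-based indices);
   only entries a < R_nu, b < R_{Pa(nu)} are ever used. *)
Definition weights (R : Type) N := {set 'I_N} -> nat -> nat -> R.

Fixpoint tens (R : rcfType) N (D : 'I_N -> nat) (Rk : {set 'I_N} -> nat)
  (W : weights R N) (t : mtree N) (r : nat) (i : mindex D) : R :=
  match t with
  | MLeaf n => W [set n] (i n) r
  | MNode ts =>
      \sum_(r' < Rk (label t))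
        W (label t) r' r *
        (fix prodc (l : seq (mtree N)) : R :=
           match l with [::] => 1 | c :: l' => tens Rk W c r' i * prodc l' end) ts
  end.

(* end tensor W_H  (R_{Pa([N])} = 1, so the root is evaluated at column 0) *)
Definition end_tensor (R : rcfType) N (D : 'I_N -> nat) (Rk : {set 'I_N} -> nat)
  (W : weights R N) (T : mtree N) (i : mindex D) : R :=
  tens Rk W T 0 i.

Fixpoint tens_repl (R : rcfType) N (D : 'I_N -> nat) (Rk : {set 'I_N} -> nat)
  (W : weights R N) (nu : {set 'I_N}) (g : nat -> mindex D -> R)
  (t : mtree N) (r : nat) (i : mindex D) : R :=
  match t with
  | MLeaf n => W [set n] (i n) r
  | MNode ts =>
      if label t == nu then g r i else
      \sum_(r' < Rk (label t))
        W (label t) r' r *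
        (fix prodc (l : seq (mtree N)) : R :=
           match l with [::] => 1 | c :: l' => tens_repl Rk W nu g c r' i * prodc l' end) ts
  end.

Definition row_norm (R : rcfType) N (W : weights R N) (nu : {set 'I_N}) (r p : nat) : R :=
  Num.sqrt (\sum_(j < p) W nu r j ^+ 2).
Definition col_norm (R : rcfType) N (W : weights R N) (mu : {set 'I_N}) (k r : nat) : R :=
  Num.sqrt (\sum_(a < k) W mu a r ^+ 2).

(* sigma_{nu,r} for the interior node nu = MNode cs whose parent has rank pr *)
Definition sigma (R : rcfType) N (D : 'I_N -> nat) (Rk : {set 'I_N} -> nat)
  (W : weights R N) (cs : seq (mtree N)) (pr r : nat) : R :=
  row_norm W (label (MNode cs)) r pr *
  \prod_(c <- cs) col_norm W (label c) (node_rank D Rk c) r.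

Definition Eten (R : rcfType) N (D : 'I_N -> nat) (Rk : {set 'I_N} -> nat)
  (W : weights R N) (T : mtree N) (cs : seq (mtree N)) (pr r : nat)
  (i : mindex D) : R :=
  let s := sigma D Rk W cs pr r in
  if s == 0 then 0 else
  tens_repl Rk W (label (MNode cs))
    (fun r'' j => s^-1 * W (label (MNode cs)) r r'' * \prod_(c <- cs) tens Rk W c r j)
    T 0 i.

Definition keep_row (R : rcfType) N (W : weights R N) (nu : {set 'I_N}) (r : nat)
  : weights R N :=
  fun mu a b => if mu == nu then (if a == r then W mu a b else 0) else W mu a b.

Definition keep_col (R : rcfType) N (W : weights R N) (nu : {set 'I_N}) (r : nat)
  : weights R N :=
  fun mu a b => if mu == nu then (if b == r then W mu a b else 0) else W mu a b.

Arguments sigma {R N} D Rk W cs pr r.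
Arguments Eten {R N} D Rk W T cs pr r i.

(* Main.v *)
Require Import Defs.
From HB Require Import structures.
From mathcomp Require Import all_boot all_order all_algebra.
From Stdlib Require List.
Import Order.TTheory GRing.Theory Num.Theory.
Set Implicit Arguments. Unset Strict Implicit. Unset Printing Implicit Defensive.
Local Open Scope ring_scope.

Section Aux.
Variable N : nat.

Fixpoint mtree_ind' (P : mtree N -> Prop) (HL : forall n, P (MLeaf n))
  (HN : forall ts, (forall c, List.In c ts -> P c) -> P (MNode ts)) (t : mtree N) : P t :=
  match t with
  | MLeaf n => HL n
  | MNode ts => HN ts ((fix go (l : seq (mtree N)) : forall c, List.In c l -> P c :=
        match l with
        | [::] => fun c H => False_ind _ H
        | c' :: l' => fun c H => match H with
                                 | or_introl e => eq_ind c' P (mtree_ind' HL HN c') c e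
                                 | or_intror H' => go l' c H'
                                 end
        end) ts)
  end.

Lemma all_labels_node (ts : seq (mtree N)) :
  all_labels (MNode ts) = label (MNode ts) :: flatten (map (@all_labels N) ts).
Proof. rewrite /=; congr (_ :: _); elim: ts => //= c l ->. by []. Qed.

Lemma label_in (t : mtree N) : label t \in all_labels t.
Proof. case: t => [n|ts]; first by rewrite /= inE. by rewrite all_labels_node inE eqxx. Qed.

Lemma int_nodes_aux (Rk : {set 'I_N} -> nat) k l :
  (fix go (l : seq (mtree N)) : seq (seq (mtree N) * nat) :=
     match l with [::] => [::] | c :: l' => int_nodes Rk c k ++ go l' end) l
  = flatten (map (fun c => int_nodes Rk c k) l).
Proof. by elim: l => //= c l ->. Qed.

Lemma int_nodes_node (Rk : {set 'I_N} -> nat) ts pr :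
  int_nodes Rk (MNode ts) pr =
  (ts, pr) :: flatten (map (fun c => int_nodes Rk c (Rk (label (MNode ts)))) ts).
Proof. by rewrite -int_nodes_aux. Qed.

Lemma In_cat (A : Type) (s1 s2 : seq A) x :
  List.In x (s1 ++ s2) <-> List.In x s1 \/ List.In x s2.
Proof. elim: s1 => /= [|a s IH]; [tauto | rewrite IH; tauto]. Qed.

Lemma In_flatten (A B : Type) (f : A -> seq B) l x :
  List.In x (flatten (map f l)) -> exists c, List.In c l /\ List.In x (f c).
Proof.
elim: l => //= c l IH.
move/In_cat => [H|/IH [c' [H1 H2]]]; [by exists c; auto | by exists c'; auto].
Qed.

Lemma sub_flatten (A : Type) (B : eqType) (f : A -> seq B) l c :
  List.In c l -> {subset f c <= flatten (map f l)}.
Proof.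
elim: l => //= c' l IH [<-|/IH H] x Hx; rewrite mem_cat ?Hx //.
by rewrite H ?orbT.
Qed.

Lemma uniq_flatten (A : Type) (B : eqType) (f : A -> seq B) l c :
  List.In c l -> uniq (flatten (map f l)) -> uniq (f c).
Proof.
elim: l => //= c' l IH [<-|/IH H]; rewrite cat_uniq; first by case/and3P.
by case/and3P => _ _ /H.
Qed.

Variable R : rcfType.
Variable D : 'I_N -> nat.
Variable Rk : {set 'I_N} -> nat.

Lemma prodc_aux (f : mtree N -> R) l :
  (fix prodc (l : seq (mtree N)) : R :=
     match l with [::] => 1 | c :: l' => f c * prodc l' end) l
  = \prod_(c <- l) f c.
Proof. by elim: l => /= [|c l ->]; rewrite ?big_nil ?big_cons. Qed.

Lemma tens_node (W : weights R N) ts r (i : mindex D) :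
  tens Rk W (MNode ts) r i =
  \sum_(r' < Rk (label (MNode ts))) W (label (MNode ts)) r' r *
      \prod_(c <- ts) tens Rk W c r' i.
Proof. rewrite [LHS]/=; apply: eq_bigr => r' _; by rewrite -prodc_aux. Qed.

Lemma tens_repl_node (W : weights R N) nu g ts r (i : mindex D) :
  tens_repl Rk W nu g (MNode ts) r i =
  if label (MNode ts) == nu then g r i else
  \sum_(r' < Rk (label (MNode ts))) W (label (MNode ts)) r' r *
      \prod_(c <- ts) tens_repl Rk W nu g c r' i.
Proof. rewrite [LHS]/=; case: ifP => // _; apply: eq_bigr => r' _; by rewrite -prodc_aux. Qed.


Lemma subtree (t : mtree N) pr0 cs pr :
  List.In (cs, pr) (int_nodes Rk t pr0) -> uniq (all_labels t) ->
  uniq (all_labels (MNode cs)) /\ {subset all_labels (MNode cs) <= all_labels t}.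
Proof.
elim/mtree_ind': t pr0 => [n|ts IH] pr0 //.
rewrite int_nodes_node => -[[<- _] Hu|]; first by split.
rewrite all_labels_node; move=> Hin0 /andP [_ Hu]; have [c [Hc Hin]] := In_flatten Hin0.
have [Hu1 Hs] := IH c Hc _ Hin (uniq_flatten Hc Hu).
split=> // x /Hs /(sub_flatten Hc) Hx; by rewrite inE Hx orbT.
Qed.

Lemma prod_eq (F G : mtree N -> R) l :
  (forall c, List.In c l -> F c = G c) -> \prod_(c <- l) F c = \prod_(c <- l) G c.
Proof.
elim: l => [|c l IH] H; rewrite ?big_nil // !big_cons H /=; last by left.
by rewrite IH // => c' Hc'; apply: H; right.
Qed.

Lemma prod_zero (F : mtree N -> R) l c :
  List.In c l -> F c = 0 -> \prod_(x <- l) F x = 0.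
Proof.
elim: l => //= c' l IH [<-|/IH H] H0; rewrite big_cons ?H0 ?mul0r //.
by rewrite H // mulr0.
Qed.

Lemma prod_scale (F G : mtree N -> R) k l c :
  List.In c l -> uniq (flatten (map (@all_labels N) l)) -> F c = k * G c ->
  (forall c', List.In c' l -> (forall x, x \in all_labels c -> x \notin all_labels c') ->
     F c' = G c') ->
  \prod_(x <- l) F x = k * \prod_(x <- l) G x.
Proof.
elim: l => //= c1 l IH Hin; rewrite cat_uniq => /and3P [_ Hd Hu] Hc Hoth.
rewrite !big_cons; case: Hin => [Ec|Hin].
  subst c1; rewrite Hc -mulrA; congr (_ * (_ * _)); apply: prod_eq => c' Hc'.
  apply: Hoth; first by right.
  move=> x Hx; apply/negP => Hx'.
  by move/hasP: Hd; apply; exists x => //; apply: (sub_flatten Hc').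
rewrite (IH Hin Hu Hc); last by move=> c' Hc'; apply: Hoth; right.
rewrite Hoth; [by rewrite mulrCA| by left|].
move=> x Hx; apply/negP => Hx'.
by move/hasP: Hd; apply; exists x => //; apply: (sub_flatten Hin).
Qed.

Lemma tens_local (W W' : weights R N) (t : mtree N) r (i : mindex D) :
  (forall mu, mu \in all_labels t -> forall a b, W' mu a b = W mu a b) ->
  tens Rk W' t r i = tens Rk W t r i.
Proof.
elim/mtree_ind': t r => [n|ts IH] r H; first by rewrite /= H // inE.
rewrite !tens_node; apply: eq_bigr => r' _; rewrite H ?label_in //; congr (_ * _).
apply: prod_eq => c Hc; apply: IH => // mu Hmu; apply: H.
by rewrite all_labels_node inE (sub_flatten Hc Hmu) orbT.
Qed.

Lemma tens_repl_off (W : weights R N) nu g (t : mtree N) r (i : mindex D) :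
  nu \notin all_labels t -> tens_repl Rk W nu g t r i = tens Rk W t r i.
Proof.
elim/mtree_ind': t r => [n|ts IH] r H //.
rewrite tens_repl_node tens_node; case: eqP => [E|_].
  by move: H; rewrite -E label_in.
apply: eq_bigr => r' _; congr (_ * _).
apply: prod_eq => c Hc; apply: IH => //; apply: contra H => Hmu.
by rewrite all_labels_node inE (sub_flatten Hc Hmu) orbT.
Qed.

Lemma L4 (t : mtree N) pr0 cs pr (W W' : weights R N) (a : R) g r0 (i : mindex D) :
  List.In (cs, pr) (int_nodes Rk t pr0) -> uniq (all_labels t) ->
  (forall mu, mu \notin all_labels (MNode cs) -> forall x y, W' mu x y = W mu x y) ->
  (forall r (j : mindex D), (r < pr)%N -> tens Rk W' (MNode cs) r j = a * g r j) ->
  (r0 < pr0)%N ->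
  tens Rk W' t r0 i = a * tens_repl Rk W (label (MNode cs)) g t r0 i.
Proof.
move=> Hin Hu HW Hg.
elim/mtree_ind': t pr0 r0 Hin Hu => [n|ts IH] pr0 r0 //.
rewrite int_nodes_node => -[[E Ep]|]; subst.
  by move=> _ Hr; rewrite tens_repl_node eqxx Hg.
move=> Hin0; have [c [Hc Hin]] := In_flatten Hin0.
rewrite all_labels_node cons_uniq => /andP [Hnt Hu] Hr.
have Huc := uniq_flatten Hc Hu.
have [_ Hs] := subtree Hin Huc.
have Hnu : label (MNode cs) \in all_labels c by apply: Hs; apply: label_in.
rewrite tens_repl_node tens_node ifF; last first.
  apply/negP => /eqP E; move: Hnt; by rewrite E (sub_flatten Hc Hnu).
rewrite mulr_sumr; apply: eq_bigr => r' _.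
rewrite HW; last by apply: contra Hnt => /Hs /(sub_flatten Hc).
rewrite mulrCA; congr (_ * _).
apply: (prod_scale Hc Hu); first by apply: (IH c Hc _ _ Hin Huc).
move=> c' Hc' Hdis.
rewrite tens_repl_off; last by apply: Hdis.
apply: tens_local => mu Hmu x y; apply: HW; apply: contraL Hmu => /Hs /Hdis //.
Qed.


Lemma prod_eq0_In (F : mtree N -> R) l :
  \prod_(x <- l) F x = 0 -> exists c, List.In c l /\ F c = 0.
Proof.
elim: l => [|c l IH]; first by rewrite big_nil => /eqP; rewrite oner_eq0.
rewrite big_cons => /eqP; rewrite mulf_eq0 => /orP [/eqP H|/eqP /IH [c' [H1 H2]]].
  by exists c; split => //; left.
by exists c'; split => //; right.
Qed.

Lemma sumsq0 (K : nat) (f : nat -> R) :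
  Num.sqrt (\sum_(j < K) f j ^+ 2) = 0 -> forall j, (j < K)%N -> f j = 0.
Proof.
move=> /eqP; rewrite sqrtr_eq0 => Hle j Hj.
have Hs : \sum_(j < K) f j ^+ 2 = 0.
  by apply/le_anti; rewrite Hle sumr_ge0 // => k _; rewrite sqr_ge0.
have H0 : forall k : 'I_K, true -> f k ^+ 2 = 0.
  by apply: psumr_eq0P Hs => k _; rewrite sqr_ge0.
by move: (H0 (Ordinal Hj) isT) => /eqP; rewrite sqrf_eq0 => /eqP.
Qed.

Lemma colnorm0 (W : weights R N) (c : mtree N) r (j : mindex D) :
  col_norm W (label c) (node_rank D Rk c) r = 0 -> tens Rk W c r j = 0.
Proof.
rewrite /col_norm => /(sumsq0 (f := fun a => W (label c) a r)) H; case: c H => [n|ts] H /=; first exact: H.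
rewrite -/(tens Rk W (MNode ts) r j) tens_node big1 // => r' _.
by rewrite H // mul0r.
Qed.

Lemma sum_delta (K r : nat) (F : 'I_K -> R) (Hr : (r < K)%N) :
  (forall r' : 'I_K, (nat_of_ord r' != r) -> F r' = 0) ->
  \sum_(r' < K) F r' = F (Ordinal Hr).
Proof.
move=> H; rewrite (bigD1 (Ordinal Hr)) //= big1 ?addr0 // => r' Hne.
Qed.

Lemma keep_col_tens (W : weights R N) (c : mtree N) r r' (j : mindex D) :
  uniq (all_labels c) ->
  tens Rk (keep_col W (label c) r) c r' j = (r' == r)%:R * tens Rk W c r' j.
Proof.
case: c => [n|ts].
  by move=> _ /=; rewrite /keep_col eqxx; case: eqP => _; rewrite ?mul1r ?mul0r.
move=> Hu.
rewrite !tens_node mulr_sumr.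
apply: eq_bigr => a _; rewrite {1}/keep_col eqxx.
have -> : \prod_(c0 <- ts) tens Rk (keep_col W (label (MNode ts)) r) c0 a j =
          \prod_(c0 <- ts) tens Rk W c0 a j.
  apply: prod_eq => c0 Hc0; apply: tens_local => mu Hmu x y.
  rewrite /keep_col ifF //; apply/negP => /eqP E.
  move: Hu; rewrite all_labels_node cons_uniq -E.
  by rewrite (sub_flatten Hc0 Hmu).
by case: eqP => _; rewrite ?mul1r ?mul0r.
Qed.

End Aux.

Unset Implicit Arguments.
Set Strict Implicit.
Theorem lemma12 (R : rcfType) (N : nat) (D : 'I_N -> nat) (T : mtree N)
  (Rk : {set 'I_N} -> nat) (W : weights R N)
  (cs : seq (mtree N)) (pr : nat) (c : mtree N) (r : nat) :
  mode_tree T ->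
  List.In (cs, pr) (int_nodes Rk T 1) ->
  List.In c cs ->
  (r < Rk (label (MNode cs)))%N ->
  (forall i : mindex D,
     end_tensor Rk (keep_row W (label (MNode cs)) r) T i =
     sigma D Rk W cs pr r * Eten D Rk W T cs pr r i) /\
  (forall i : mindex D,
     end_tensor Rk (keep_col W (label c) r) T i =
     sigma D Rk W cs pr r * Eten D Rk W T cs pr r i).
Proof.
move=> [_ _ HuT] Hin Hc Hr.
have [Hucs Hsub] := subtree Hin HuT.
set nu := label (MNode cs).
set s := sigma D Rk W cs pr r.
have Hucs' := Hucs; rewrite all_labels_node cons_uniq in Hucs'.
case/andP: Hucs' => Hnu Huf.
have Hzero : s = 0 -> forall r'' (j : mindex D), (r'' < pr)%N ->
    W nu r r'' * \prod_(c0 <- cs) tens Rk W c0 r j = 0.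
  move=> /eqP; rewrite /s /sigma mulf_eq0 => /orP [/eqP H|/eqP H] r'' j Hr''.
    by rewrite (sumsq0 H) ?mul0r.
  have [c0 [Hc0 H0]] := prod_eq0_In H.
  by rewrite (prod_zero Hc0 (colnorm0 j H0)) mulr0.
have Hgen : forall W' : weights R N,
    (forall mu, mu \notin all_labels (MNode cs) -> forall x y, W' mu x y = W mu x y) ->
    (forall r'' (j : mindex D), tens Rk W' (MNode cs) r'' j =
        W nu r r'' * \prod_(c0 <- cs) tens Rk W c0 r j) ->
    forall i : mindex D, end_tensor Rk W' T i = s * Eten D Rk W T cs pr r i.
  move=> W' HW HX i; rewrite /end_tensor /Eten; cbv zeta; rewrite -/nu -/s.
  rewrite (L4 (a := s) (g := fun r'' j => s^-1 * W nu r r'' *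
                 \prod_(c0 <- cs) tens Rk W c0 r j) (pr0 := 1%N) i Hin HuT HW) //.
    by case: eqP => [->|_]; rewrite ?mul0r ?mulr0.
  move=> r'' j Hr''; rewrite HX; case: (eqVneq s 0) => [E|Hs].
    by rewrite (Hzero E) // E mul0r.
  by rewrite !mulrA mulfV ?mul1r.
split.
  apply: Hgen.
    move=> mu Hmu x y; rewrite /keep_row ifF //; apply/negP => /eqP E.
    by move: Hmu; rewrite E label_in.
  move=> r'' j; rewrite tens_node -/nu.
  rewrite (sum_delta Hr); last by move=> r' Hne; rewrite /keep_row eqxx ifF ?mul0r //; apply/negbTE.
  rewrite /keep_row /= !eqxx; congr (_ * _); apply: prod_eq => c0 Hc0.
  apply: tens_local => mu Hmu x y; rewrite ifF //; apply/negP => /eqP E.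
  by move: Hnu; rewrite -/nu -E (sub_flatten Hc0 Hmu).
have Hlc : label c \in flatten (map (@all_labels N) cs) by apply: (sub_flatten Hc); apply: label_in.
apply: Hgen.
  move=> mu Hmu x y; rewrite /keep_col ifF //; apply/negP => /eqP E.
  by move: Hmu; rewrite E all_labels_node inE Hlc orbT.
move=> r'' j; rewrite tens_node -/nu.
have Hne : (nu == label c) = false by apply/negP => /eqP E; move: Hnu; rewrite -/nu E Hlc.
have Hp : forall r' : nat, \prod_(c0 <- cs) tens Rk (keep_col W (label c) r) c0 r' j =
    (r' == r)%:R * \prod_(c0 <- cs) tens Rk W c0 r' j.
  move=> r'; apply: (prod_scale Hc Huf).
    by apply: keep_col_tens; apply: (uniq_flatten Hc Huf).
  move=> c' Hc' Hdis; apply: tens_local => mu Hmu x y; rewrite /keep_col ifF //.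
  apply/negP => /eqP E; move: (Hdis _ (label_in c)); by rewrite -E Hmu.
rewrite (eq_bigr (fun r' : 'I_(Rk nu) => W nu r' r'' * ((nat_of_ord r' == r)%:R * \prod_(c0 <- cs) tens Rk W c0 r' j))); last first.
  by move=> r' _; rewrite Hp /keep_col Hne.
rewrite (sum_delta Hr); last by move=> r' Hne'; rewrite (negbTE Hne') mul0r mulr0.
by rewrite /= eqxx mul1r.
Qed.
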